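(* Let $s,b\ge1$, let $(a_i)$ be the $(s,b)$-Generacci sequence, and let $p\ge1$. If an integer $k\ge2$ has an $(s,b)$-Generacci legal decomposition using only summands from $\{a_1,\dots,a_p\}$, then so does $k-1$. Consequently, the smallest positive integer with no such decomposition using $\{a_1,\dots,a_p\}$ is one more than the largest integer that has one.
   Context: Fix integers $s,b\ge1$. For an increasing sequence of positive integers $(a_i)_{i\ge1}$, the bins are $\mathcal B_n=\{a_{b(n-1)+1},\dots,a_{bn}\}$ for $n\ge1$, and $\mathcal B_n=\emptyset$ for $n\le 0$. An $(s,b)$-Generacci legal decomposition of a positive integer $m$ using this sequence is an expression $m=a_{\ell_1}+\cdots+a_{\ell_k}$ with $a_{\ell_1}>a_{\ell_2}>\cdots>a_{\ell_k}$ such that for all $i$ and all $j$, $\{a_{\ell_i},a_{\ell_{i+1}}\}\not\subset \mathcal B_{j-s}\cup\mathcal B_{j-s+1}\cup\cdots\cup\mathcal B_j$ (so no two summands lie in the same bin, and the bins containing any two summands have at least $s$ bins strictly between them). The $(s,b)$-Generacci sequence is the increasing sequence of positive integers $(a_i)_{i\ge1}$ in which each $a_i$ is the smallest positive integer that has no $(s,b)$-Generacci legal decomposition using only elements of $\{a_1,\dots,a_{i-1}\}$. *)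

(* Defs.v *)
From mathcomp Require Import all_boot.
Set Implicit Arguments. Unset Strict Implicit. Unset Printing Implicit Defensive.

(* Sequences are a : nat -> nat, with a i meaning a_i for i >= 1 (a 0 unused). *)

(* Index of the bin containing a_i (i >= 1): B_n = {a_{b(n-1)+1},...,a_{bn}}. *)
Definition bin (b i : nat) : nat := (i - 1) %/ b + 1.

(* a_x and a_y both lie in B_{j-s} ∪ ... ∪ B_j.  Bins with index <= 0 are
   empty; since bin indices are >= 1, truncated subtraction j - s is harmless. *)
Definition in_window (s b j x y : nat) : Prop :=
  (j - s <= bin b x <= j) && (j - s <= bin b y <= j).

Definition far_apart (s b x y : nat) : Prop :=
  ~ (exists j : nat, in_window s b j x y).

Definition legal_decomp (s b : nat) (a : nat -> nat) (p m : nat) : Prop :=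
  exists l : seq nat,
    [/\ l != [::],
        all (fun i => 1 <= i <= p) l,
        sorted (fun x y => a y < a x) l,
        (forall i, i.+1 < size l -> far_apart s b (nth 0 l i) (nth 0 l i.+1)) &
        \sum_(i <- l) a i = m].

Definition is_generacci (s b : nat) (a : nat -> nat) : Prop :=
  (forall i, 1 <= i -> a i < a i.+1) /\
  (forall i, 1 <= i ->
     [/\ 0 < a i,
         ~ legal_decomp s b a i.-1 (a i) &
         forall m, 0 < m < a i -> legal_decomp s b a i.-1 m]).

(* Main.v *)
Require Import Defs.
From mathcomp Require Import all_boot.
From mathcomp Require Import zify.
From Stdlib Require Import Classical.

Definition Erel (s b : nat) (a : nat -> nat) (x y : nat) : bool :=
  (a y < a x) && (bin b y + s < bin b x).

Definition LD (s b : nat) (a : nat -> nat) (p m : nat) : Prop :=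
  exists l : seq nat,
    [/\ l != [::], all (fun i => 1 <= i <= p) l, sorted (Erel s b a) l &
        \sum_(i <- l) a i = m].

Lemma far_of s b x y : bin b y + s < bin b x -> far_apart s b x y.
Proof.
move=> H [j /andP[/andP[h1 h2] /andP[h3 h4]]]; lia.
Qed.

Lemma far_to s b x y : far_apart s b x y -> bin b y <= bin b x ->
  bin b y + s < bin b x.
Proof.
move=> H le; rewrite ltnNge; apply/negP=> h; apply: H; exists (bin b x).
rewrite /in_window; apply/andP; split; apply/andP; split; lia.
Qed.

Lemma bin_mono b x y : y <= x -> bin b y <= bin b x.
Proof.
move=> h; rewrite /bin leq_add2r; apply: leq_div2r; exact: leq_sub2r.
Qed.

Lemma bin_lt b x y : bin b y < bin b x -> y < x.
Proof.
move=> h; rewrite ltnNge; apply/negP => h'; have := @bin_mono b _ _ h'; lia.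
Qed.

Lemma amono s b a (ha : is_generacci s b a) i j : 1 <= i -> i <= j -> a i <= a j.
Proof.
move=> hi; elim: j => [|j IH] hij; first lia.
rewrite leq_eqVlt in hij; case/orP: hij => [/eqP->//|hij].
have := IH hij; have := ha.1 j (leq_trans hi hij); lia.
Qed.

Lemma astrict s b a (ha : is_generacci s b a) i j : 1 <= i -> i < j -> a i < a j.
Proof.
move=> hi hij; have := ha.1 i hi; have := @amono s b a ha _ _ (leq_trans hi (leqnSn i)) hij; lia.
Qed.

Lemma ainv s b a (ha : is_generacci s b a) x y : 1 <= x -> 1 <= y -> a y < a x -> y < x.
Proof.
move=> hx hy h; rewrite ltnNge; apply/negP => h'; have := @amono s b a ha _ _ hx h'; lia.
Qed.

Lemma LD_of s b a p m (ha : is_generacci s b a) :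
  legal_decomp s b a p m -> LD s b a p m.
Proof.
move=> [l [ne al so fa su]]; exists l; split=> //.
apply/(sortedP 0) => i hi.
have hr := (sortedP 0 so) i hi.
have hx : 1 <= nth 0 l i.
  by have /andP[] := allP al _ (mem_nth 0 (ltnW hi)).
have hy : 1 <= nth 0 l i.+1.
  by have /andP[] := allP al _ (mem_nth 0 hi).
rewrite /Erel hr /=; apply: far_to; first exact: fa.
apply: bin_mono; apply: ltnW; exact: (@ainv s b a ha _ _ hx hy hr).
Qed.

Lemma of_LD s b a p m : LD s b a p m -> legal_decomp s b a p m.
Proof.
move=> [l [ne al so su]]; exists l; split=> //.
  by apply: sub_sorted so => x y /andP[].
move=> i hi; have /andP[_ h] := (sortedP 0 so) i hi; exact: far_of.
Qed.

Lemma step s b a p k (ha : is_generacci s b a) :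
  2 <= k -> LD s b a p k -> LD s b a p k.-1.
Proof.
move=> hk [l [ne al so su]].
case/lastP: l ne al so su => [//|l' x] _ al so su.
rewrite -cats1 big_cat big_seq1 /= in su.
rewrite all_rcons in al; case/andP: al => /andP[x1 xp] al'.
have [ax0 nd dec] := ha.2 x x1.
case: (ltnP 1 (a x)) => ax.
- have /(@LD_of s b a _ _ ha) [q [qne qal qso qsu]] : legal_decomp s b a x.-1 (a x).-1.
    apply: dec; lia.
  exists (l' ++ q); split.
  + by case: l' {so su al'}.
  + rewrite all_cat al' /=; apply/allP => i /(allP qal) /andP[h1 h2].
    apply/andP; split => //; lia.
  + case: l' so al' su => [|y l''] so al' su //=.
    rewrite /= rcons_path in so; case/andP: so => so1 so2.
    rewrite cat_path so1 /=.
    case: q qne qal qso qsu => [//|h q'] _ qal qso qsu /=.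
    rewrite /= in qso; rewrite qso andbT.
    move: qal => /= /andP[/andP[h1 h2] _].
    case/andP: so2 => s1 s2; apply/andP; split.
      have := @astrict s b a ha h x h1 (_ : h < x); lia.
    have := @bin_mono b x h (_ : h <= x); lia.
  + rewrite big_cat /= qsu -su; lia.
- case: l' so al' su => [|y l''] so al' su.
    rewrite big_nil in su; lia.
  exists (y :: l''); split => //.
    by rewrite /= rcons_path in so; case/andP: so.
  rewrite -su; lia.
Qed.

Fixpoint Ssum (a : nat -> nat) (n : nat) : nat :=
  if n is n'.+1 then a n' + Ssum a n' else 0.

Lemma Smono a n m : n <= m -> Ssum a n <= Ssum a m.
Proof.
move=> /subnKC <-; elim: (m - n) => [|d IH]; rewrite ?addn0 // addnS /=; lia.
Qed.

Lemma path_bound a l x : path (fun u v => v < u) x l -> \sum_(i <- l) a i <= Ssum a x.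
Proof.
elim: l x => [|y l IH] x; first by rewrite big_nil.
move=> /= /andP[yx pl]; rewrite big_cons.
have := IH y pl; have := @Smono a _ _ yx; rewrite /=; lia.
Qed.

Lemma LD_bound s b a p n : LD s b a p n -> n <= Ssum a p.+1.
Proof.
move=> [l0 [ne al so su]]; case: l0 ne al so su => [//|x l] _ al so su.
have pl : path (fun u v => v < u) x l.
  apply: sub_path so => u v /andP[_ h]; apply: bin_lt (_ : bin b v < bin b u); lia.
move: al => /= /andP[/andP[_ xp] _].
rewrite -su big_cons; have := @path_bound a _ _ pl; have := @Smono a x.+1 p.+1 xp; rewrite /=; lia.
Qed.

Lemma exmax (P : nat -> Prop) N : (forall n, P n -> n <= N) -> P 1 ->
  exists M, P M /\ forall n, P n -> n <= M.
Proof.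
elim: N => [|N IH] hb p1; first by have := hb 1 p1.
case: (classic (P N.+1)) => h; first by exists N.+1.
apply: IH => // n pn; have := hb n pn; rewrite leq_eqVlt; case/orP => [/eqP e|//].
by exfalso; apply: h; rewrite -e.
Qed.

Theorem mainTheorem5 (s b : nat) (hs : 1 <= s) (hb : 1 <= b)
    (a : nat -> nat) (ha : is_generacci s b a) (p : nat) (hp : 1 <= p) :
  (forall k, 2 <= k -> legal_decomp s b a p k -> legal_decomp s b a p k.-1) /\
  (exists M : nat,
     (* M is the largest integer with such a decomposition *)
     (legal_decomp s b a p M /\ forall n, legal_decomp s b a p n -> n <= M) /\
     (* M + 1 is the smallest positive integer with no such decomposition *)
     (~ legal_decomp s b a p M.+1 /\
      forall n, 0 < n <= M -> legal_decomp s b a p n)).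
Proof.
have part1 : forall k, 2 <= k -> legal_decomp s b a p k -> legal_decomp s b a p k.-1.
  by move=> k hk /(@LD_of s b a _ _ ha) h; apply: of_LD; apply: step.
split => //.
have a1 : a 1 = 1.
  have [a0 _ dec] := ha.2 1 (leqnn 1).
  case: (ltnP 1 (a 1)) => h; last lia.
  have hd : 0 < 1 < a 1 by rewrite h.
  have [l0 [ne al _ _ _]] := dec 1 hd.
  case: l0 ne al => [//|x l] _ al.
  by move: al => /= /andP[/andP[h1 h2] _]; lia.
have P1 : legal_decomp s b a p 1.
  apply: of_LD; exists [:: 1]; split => //=; first by rewrite hp.
  by rewrite big_seq1.
have [M [PM Mmax]] := @exmax (legal_decomp s b a p) (Ssum a p.+1)
  (fun n h => @LD_bound s b a p n (@LD_of s b a _ _ ha h)) P1.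
exists M; split => //; split.
  by move=> /Mmax; rewrite ltnn.
move=> n /andP[n0 nM].
have key : forall d, d < M -> legal_decomp s b a p (M - d).
  elim => [|d IH] hd; first by rewrite subn0.
  have := part1 (M - d) (_ : 2 <= M - d) (IH (ltnW hd)); rewrite -subnS; apply; lia.
have := key (M - n) (_ : M - n < M); rewrite subKn //; apply; lia.
Qed.
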